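(* For any connected graph $G$ of order $n\ge 2$ with maximum degree $\Delta$, $$\max\Big\{\gamma(G),\frac{2}{\Delta}\alpha(G)\Big\}+\beta(G)\le\gamma_{oidR}(G)\le 3\beta(G).$$ Moreover, both bounds are sharp: there exist connected graphs attaining equality in the lower bound and connected graphs attaining equality in the upper bound.
   Context: $\gamma(G)$ is the domination number, $\alpha(G)$ the independence number and $\beta(G)$ the vertex cover number of $G$. A DRD function of $G$ is $f:V(G)\to\{0,1,2,3\}$ such that every vertex with value $0$ has a neighbor with value $3$ or two neighbors with value $2$, and every vertex with value $1$ has a neighbor with value at least $2$; it is an OIDRD function if the set of vertices with value $0$ is independent, and $\gamma_{oidR}(G)$ is the minimum weight $\sum_v f(v)$ of an OIDRD function. *)

(* Defs.v *)
From mathcomp Require Import all_boot all_order all_algebra.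
Set Implicit Arguments. Unset Strict Implicit. Unset Printing Implicit Defensive.
Import Order.TTheory GRing.Theory Num.Theory.

Section Graph.
Variables (T : finType) (e : rel T).

Definition simple_graph : Prop := symmetric e /\ irreflexive e.

Definition connected_graph : Prop := forall x y : T, connect e x y.

Definition nbhd (v : T) : {set T} := [set u | e v u].
Definition deg (v : T) : nat := #|nbhd v|.
Definition max_degree : nat := \max_(v : T) deg v.

Definition dominating (D : {set T}) : bool :=
  [forall v, (v \in D) || [exists u in D, e v u]].
Definition independent (S : {set T}) : bool :=
  [forall x in S, forall y in S, ~~ e x y].
Definition vertex_cover (S : {set T}) : bool :=
  [forall x, forall y, e x y ==> (x \in S) || (y \in S)].

Definition gamma : nat := \big[minn/#|T|]_(D : {set T} | dominating D) #|D|.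
Definition alpha : nat := \max_(S : {set T} | independent S) #|S|.
Definition beta : nat := \big[minn/#|T|]_(S : {set T} | vertex_cover S) #|S|.

Definition DRD (f : {ffun T -> 'I_4}) : bool :=
  [forall v,
     ((f v : nat) == 0) ==>
       ([exists u, e v u && ((f u : nat) == 3)] ||
        [exists u1, exists u2, [&& u1 != u2, e v u1, e v u2,
                                  (f u1 : nat) == 2 & (f u2 : nat) == 2]])]
  && [forall v, ((f v : nat) == 1) ==> [exists u, e v u && (2 <= f u)]].

Definition zero_set (f : {ffun T -> 'I_4}) : {set T} := [set v | (f v : nat) == 0].

Definition OIDRD (f : {ffun T -> 'I_4}) : bool := DRD f && independent (zero_set f).

Definition weight (f : {ffun T -> 'I_4}) : nat := \sum_(v : T) (f v : nat).

(* outer-independent double Roman domination number; the constant function 3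
   is always an OIDRD function of weight 3|V|, so 3|V| is a safe default. *)
Definition gamma_oidR : nat :=
  \big[minn/(3 * #|T|)]_(f : {ffun T -> 'I_4} | OIDRD f) weight f.

Definition lower_bound : rat :=
  (Num.max (gamma%:R) (2 * alpha%:R / max_degree%:R) + beta%:R)%R.

End Graph.

(* Main.v *)
Require Import Defs.
From mathcomp Require Import all_boot all_order all_algebra.
From mathcomp Require Import zify.
Import Order.TTheory GRing.Theory Num.Theory.
Set Implicit Arguments. Unset Strict Implicit. Unset Printing Implicit Defensive.

Lemma bigmin_le (I : finType) (P : pred I) (F : I -> nat) d i :
  P i -> (\big[minn/d]_(j | P j) F j <= F i)%N.
Proof.
move=> Pi; have : i \in index_enum I by rewrite mem_index_enum.
elim: (index_enum I) => [|j r IH] //=; rewrite inE big_cons.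
case/orP=> [/eqP<-|ir]; first by rewrite Pi geq_minl.
case: (P j); last exact: IH.
by rewrite geq_min IH ?orbT.
Qed.

Lemma bigmin_ind (I : finType) (P : pred I) (F : I -> nat) d (Q : nat -> Prop) :
  Q d -> (forall i, P i -> Q (F i)) -> Q (\big[minn/d]_(j | P j) F j).
Proof. move=> Qd QF; apply: big_ind => // x y Qx Qy; rewrite /minn; by case: ifP. Qed.

Lemma bigmax_ind (I : finType) (P : pred I) (F : I -> nat) (Q : nat -> Prop) :
  Q 0%N -> (forall i, P i -> Q (F i)) -> Q (\max_(j | P j) F j).
Proof. move=> Qd QF; apply: big_ind => // x y Qx Qy; rewrite /maxn; by case: ifP. Qed.

Lemma sum_ge1 (I : finType) (P : pred I) (F : I -> nat) a :
  P a -> (F a <= \sum_(i | P i) F i)%N.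
Proof. move=> Pa; rewrite (bigD1 a) //=; exact: leq_addr. Qed.

Lemma sum_ge2 (I : finType) (P : pred I) (F : I -> nat) a b : P a -> P b -> a != b ->
  (F a + F b <= \sum_(i | P i) F i)%N.
Proof.
move=> Pa Pb ab; rewrite (bigD1 a) //= (bigD1 b) /=; last by rewrite Pb eq_sym ab.
by rewrite addnA leq_addr.
Qed.

Lemma card_sum (I : finType) (A : {set I}) : #|A| = (\sum_v nat_of_bool (v \in A))%N.
Proof.
rewrite -sum1_card big_mkcond /=; apply: eq_bigr => v _; by case: (v \in A).
Qed.

Section Main.
Variables (T : finType) (e : rel T).
Hypothesis (hs : simple_graph e) (hc : connected_graph e) (hn : (2 <= #|T|)%N).

Lemma esymm (x y : T) : e x y = e y x. Proof. by case: hs => s _; apply: s. Qed.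
Lemma eirr (x : T) : e x x = false. Proof. by case: hs => _ i; apply: i. Qed.

Lemma other (v : T) : exists w, w != v.
Proof.
have : (1 < #|T|)%N by [].
case/card_gt1P => a [b [_ _ ab]].
case: (eqVneq a v) => [<-|av]; first by exists b; rewrite eq_sym.
by exists a.
Qed.

Lemma some_vertex : exists x : T, true.
Proof. have : (1 < #|T|)%N by []. by case/card_gt1P => a _; exists a. Qed.

Lemma has_nbr (v : T) : exists u, e v u.
Proof.
have [w wv] := other v.
have := hc v w.
case/connectP => p pth lst.
case: p pth lst => [|u p] /= => [_ eq|/andP[evu _] _]; last by exists u.
by rewrite eq eqxx in wv.
Qed.

Lemma weight_ge3 (f : {ffun T -> 'I_4}) : OIDRD e f -> (3 <= weight f)%N.
Proof.
case/andP=> /andP[/forallP H0 /forallP H1] _.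
rewrite /weight.
have S1 a : (f a <= \sum_v f v)%N := sum_ge1 (P := xpredT) (fun v => nat_of_ord (f v)) isT.
have S2 a b : a != b -> (f a + f b <= \sum_v f v)%N :=
   sum_ge2 (P := xpredT) (fun v => nat_of_ord (f v)) isT isT.
case: (pickP (fun v => (f v : nat) == 0%N)) => [v /= fv0|nz].
  have := implyP (H0 v) fv0; case/orP.
    by case/existsP => u /andP[_ /eqP fu]; apply: leq_trans (S1 u); rewrite fu.
  case/existsP => u1 /existsP [u2 /and5P [u12 _ _ /eqP f1 /eqP f2]].
  by apply: leq_trans (S2 _ _ u12); rewrite f1 f2.
have [x _] := some_vertex.
have [u exu] := has_nbr x.
have xu : x != u by apply/eqP => xu; rewrite xu eirr in exu.
case: (eqVneq (f x : nat) 1%N) => fx1.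
  case/existsP: (implyP (H1 x) (introT eqP fx1)) => u' /andP [exu' fu'].
  have xu' : x != u' by apply/eqP => xu'; rewrite xu' eirr in exu'.
  apply: leq_trans (S2 _ _ xu'); rewrite fx1; exact: fu'.
apply: leq_trans (S2 _ _ xu).
have := nz x; have := nz u; rewrite /=; lia.
Qed.

Lemma cover_bound (S : {set T}) : vertex_cover e S -> (gamma_oidR e <= 3 * #|S|)%N.
Proof.
move=> /forallP HS.
pose f : {ffun T -> 'I_4} := [ffun v => if v \in S then ord_max else ord0].
have Hf : OIDRD e f.
  apply/andP; split; [apply/andP; split|].
  - apply/forallP => v; apply/implyP; rewrite ffunE; case: ifP => vS //= _.
    have [u evu] := has_nbr v.
    have := implyP (forallP (HS v) u) evu; rewrite vS /= => uS.
    apply/orP; left; apply/existsP; exists u; by rewrite evu ffunE uS.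
  - apply/forallP => v; apply/implyP; rewrite ffunE; by case: ifP.
  - apply/forallP => x; apply/implyP; rewrite inE ffunE; case: ifP => xS //= _.
    apply/forallP => y; apply/implyP; rewrite inE ffunE; case: ifP => yS //= _.
    apply/negP => exy; have := implyP (forallP (HS x) y) exy; by rewrite xS yS.
apply: leq_trans (@bigmin_le _ (fun g => OIDRD e g) (@weight T) (3 * #|T|) f Hf) _.
rewrite /weight (eq_bigr (fun v => if v \in S then 3 else 0)%N); last first.
  by move=> v _; rewrite ffunE; case: ifP.
by rewrite -big_mkcond /= sum_nat_const mulnC.
Qed.

Lemma upper : (gamma_oidR e <= 3 * beta e)%N.
Proof.
rewrite /beta; apply: (bigmin_ind (Q := fun m => gamma_oidR e <= 3 * m)%N).
  rewrite -cardsT; apply: cover_bound; apply/forallP => x; apply/forallP => y.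
  by rewrite in_setT implybT.
move=> S; exact: cover_bound.
Qed.


Lemma deg_le_max (u : T) : (deg e u <= max_degree e)%N.
Proof. exact: (leq_bigmax (F := deg e) u). Qed.

Lemma maxdeg_ge1 : (1 <= max_degree e)%N.
Proof.
have [x _] := some_vertex; have [u exu] := has_nbr x.
apply: leq_trans (deg_le_max x).
rewrite /deg card_gt0; apply/set0Pn; exists u; by rewrite inE.
Qed.

Lemma sum_nbr_le (A : {set T}) (u : T) :
  (\sum_(v in A) nat_of_bool (e v u) <= max_degree e)%N.
Proof.
apply: leq_trans (deg_le_max u).
rewrite /deg card_sum big_mkcond /=; apply: leq_sum => v _.
rewrite inE esymm; by case: (v \in A).
Qed.

Lemma indepP (S : {set T}) x y : independent e S -> x \in S -> y \in S -> ~~ e x y.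
Proof.
move/forallP => H xS yS; have /forallP H2 := implyP (H x) xS; exact: implyP (H2 y) yS.
Qed.

Lemma alpha_ge (S : {set T}) : independent e S -> (#|S| <= alpha e)%N.
Proof. move=> H; exact: (@leq_bigmax_cond _ (fun S => independent e S) (fun S => #|S|) S H). Qed.

Lemma beta_le (S : {set T}) : vertex_cover e S -> (beta e <= #|S|)%N.
Proof. move=> H; exact: (@bigmin_le _ (fun S => vertex_cover e S) (fun S => #|S|) #|T| S H). Qed.

Lemma gamma_le (S : {set T}) : dominating e S -> (gamma e <= #|S|)%N.
Proof. move=> H; exact: (@bigmin_le _ (fun S => dominating e S) (fun S => #|S|) #|T| S H). Qed.

Lemma alpha_beta : (alpha e + beta e <= #|T|)%N.
Proof.
rewrite /alpha; apply: (bigmax_ind (Q := fun m => m + beta e <= #|T|)%N).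
  rewrite add0n /beta; apply: (bigmin_ind (Q := fun m => m <= #|T|)%N) => // S _.
  exact: max_card.
move=> I HI.
have : (beta e <= #|~: I|)%N.
  apply: beta_le; apply/forallP => x; apply/forallP => y; apply/implyP => exy.
  rewrite !inE; case xI: (x \in I); case yI: (y \in I) => //=. 
  by have := indepP HI xI yI; rewrite exy.
have := cardsC I; lia.
Qed.

Lemma small (hD : (max_degree e <= 1)%N) : (alpha e <= 1)%N /\ (beta e <= 1)%N.
Proof.
have uniq v a b : e v a -> e v b -> a = b.
  move=> ea eb; have : (#|nbhd e v| <= 1)%N by apply: leq_trans (deg_le_max v) hD.
  move/card_le1_eqP => H; apply: H; by rewrite inE.
have [x _] := some_vertex; have [u exu] := has_nbr x.
have xu : x != u by apply/eqP => xu; rewrite xu eirr in exu.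
have allv y : (y == x) || (y == u).
  pose A := [pred y | (y == x) || (y == u)].
  have step a b : e a b -> a \in A -> b \in A.
    move=> eab; rewrite !inE => /orP [/eqP ax|/eqP au]; subst a.
    - by rewrite (uniq x b u eab exu) eqxx orbT.
    - have eux : e u x by rewrite esymm.
      by rewrite (uniq u b x eab eux) eqxx.
  have clA : closed e A.
    by move=> a b eab; apply/idP/idP; [exact: step | apply: step; rewrite esymm].
  have := closed_connect clA (hc x y); move/esym; rewrite !inE eqxx /=.
  by move=> ->.
split.
  apply/bigmax_leqP => S HS; rewrite leqNgt; apply/negP => /card_gt1P [a [b [aS bS ab]]].
  have := indepP HS aS bS.
  case/orP: (allv a) => /eqP ea; case/orP: (allv b) => /eqP eb; subst a b.
  - by rewrite eqxx in ab.
  - by rewrite exu.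
  - by rewrite esymm exu.
  - by rewrite eqxx in ab.
apply: leq_trans (beta_le (S := [set x]) _) _; last by rewrite cards1.
apply/forallP => a; apply/forallP => b; apply/implyP => eab; rewrite !inE.
case/orP: (allv a) => /eqP ea; first by rewrite ea eqxx.
case/orP: (allv b) => /eqP eb; first by rewrite eb eqxx orbT.
by subst a b; rewrite eirr in eab.
Qed.


Lemma lower_nat (f : {ffun T -> 'I_4}) : OIDRD e f ->
  [/\ (gamma e + beta e <= weight f)%N,
      (2 * alpha e + max_degree e * beta e <= max_degree e * weight f)%N
      \/ max_degree e = 1%N
    & (3 <= weight f)%N].
Proof.
move=> Hf; have w3 := weight_ge3 Hf.
move: Hf => /andP [/andP [/forallP H0 /forallP H1] Hind].
set V0 := zero_set f.
set V2 := [set v | (f v : nat) == 2%N].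
set V3 := [set v | (f v : nat) == 3%N].
set V23 := [set v | (2 <= f v)%N].
have hw : weight f = (#|~: V0| + #|V23| + #|V3|)%N.
  rewrite /weight !card_sum -!big_split /=; apply: eq_bigr => v _; rewrite !inE.
  by case: (f v) => [[|[|[|[|k]]]] Hk].
have h23 : #|V23| = (#|V2| + #|V3|)%N.
  rewrite !card_sum -!big_split /=; apply: eq_bigr => v _; rewrite !inE.
  by case: (f v) => [[|[|[|[|k]]]] Hk].
have hC := cardsC V0.
have hg : (gamma e <= #|V23|)%N.
  apply: gamma_le; apply/forallP => v; rewrite inE.
  case: (leqP 2 (f v)) => //= fv.
  case: (eqVneq (f v : nat) 0%N) => fv0.
    case/orP: (implyP (H0 v) (introT eqP fv0)).
      by case/existsP => u /andP [evu /eqP fu]; apply/existsP; exists u; rewrite inE fu evu.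
    case/existsP => u1 /existsP [u2 /and5P [_ ev1 _ /eqP f1 _]].
    by apply/existsP; exists u1; rewrite inE f1 ev1.
  have fv1 : (f v : nat) == 1%N by move: fv fv0; case: (f v : nat) => [|[|]].
  case/existsP: (implyP (H1 v) fv1) => u /andP [evu fu].
  by apply/existsP; exists u; rewrite inE fu evu.
have hb : (beta e <= #|~: V0|)%N.
  apply: beta_le; apply/forallP => x; apply/forallP => y; apply/implyP => exy.
  rewrite !in_setC; case xI: (x \in V0); case yI: (y \in V0) => //=.
  by have := indepP Hind xI yI; rewrite exy.
have ha0 : (#|V0| <= alpha e)%N by apply: alpha_ge.
have hab := alpha_beta.
have hD := maxdeg_ge1.
set D := max_degree e.
have hcount : (2 * #|V0| <= 2 * (D * #|V3|) + D * #|V2|)%N.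
  pose N (A : {set T}) v := (\sum_(u in A) nat_of_bool (e v u))%N.
  have key v : v \in V0 -> (2 <= 2 * N V3 v + N V2 v)%N.
    rewrite inE => fv0; case/orP: (implyP (H0 v) fv0).
      case/existsP => u /andP [evu fu].
      have : (1 <= N V3 v)%N.
        have := @sum_ge1 _ (fun u => u \in V3) (fun u => nat_of_bool (e v u)) u.
        by rewrite /= inE fu evu => /(_ isT).
      lia.
    case/existsP => u1 /existsP [u2 /and5P [u12 ev1 ev2 f1 f2]].
    have : (2 <= N V2 v)%N.
      have := @sum_ge2 _ (fun u => u \in V2) (fun u => nat_of_bool (e v u)) u1 u2.
      by rewrite /= !inE f1 f2 ev1 ev2 => /(_ isT isT u12).
    lia.
  have E1 : (2 * #|V0| = \sum_(v in V0) 2)%N by rewrite sum_nat_const mulnC.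
  rewrite E1; apply: (leq_trans (leq_sum _ key)).
  rewrite big_split /= -big_distrr /= /N.
  rewrite [X in 2 * X]exchange_big [X in _ + X]exchange_big /=.
  apply: leq_add; first rewrite leq_mul2l; last first.
    apply: leq_trans (leq_sum _ (fun u _ => sum_nbr_le V0 u)) _.
    by rewrite sum_nat_const mulnC.
  apply/orP; right.
  apply: leq_trans (leq_sum _ (fun u _ => sum_nbr_le V0 u)) _.
  by rewrite sum_nat_const mulnC.
split.
- lia.
- case: (eqVneq D 1%N) => D1; [right => // | left].
  have D2 : (2 <= D)%N by lia.
  rewrite hw.
  nia.
- done.
Qed.


Local Open Scope ring_scope.
Lemma lower_f (f : {ffun T -> 'I_4}) : OIDRD e f -> (lower_bound e <= (weight f)%:R)%R.
Proof.
move=> Hf; have [h1 h2 h3] := lower_nat Hf.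
have hD := maxdeg_ge1.
rewrite /lower_bound -lerBrDr ge_max !lerBrDr; apply/andP; split.
  by rewrite -natrD ler_nat.
case: h2 => [h2|D1].
  have d0 : (0 < (max_degree e)%:R :> rat)%R by rewrite ltr0n.
  rewrite -(ler_pM2r d0) mulrDl divfK ?gt_eqF //.
  move: h2; rewrite -(ler_nat rat) natrD !natrM.
  by rewrite (mulrC (beta e)%:R) (mulrC (weight f)%:R).
have [a1 b1] := small (eq_leq D1).
rewrite D1 divr1.
have : (2 * alpha e + beta e <= weight f)%N by lia.
by rewrite -(ler_nat rat) natrD natrM.
Qed.

Lemma part1 : (lower_bound e <= (gamma_oidR e)%:R)%R /\ (gamma_oidR e <= 3 * beta e)%N.
Proof.
split; last exact: upper.
rewrite /gamma_oidR; apply: (bigmin_ind (Q := fun m => lower_bound e <= m%:R)%R); last first.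
  by move=> f Hf; apply: lower_f.
pose f : {ffun T -> 'I_4} := [ffun => ord_max].
have Hf : OIDRD e f.
  apply/andP; split; [apply/andP; split|].
  - by apply/forallP => v; rewrite ffunE.
  - by apply/forallP => v; rewrite ffunE.
  - by apply/forallP => x; rewrite inE ffunE.
have := lower_f Hf.
suff -> : weight f = (3 * #|T|)%N by [].
rewrite /weight (eq_bigr (fun _ => 3%N)); last by move=> v _; rewrite ffunE.
by rewrite sum_nat_const mulnC.
Qed.

Lemma goidR_ge3 : (3 <= gamma_oidR e)%N.
Proof.
rewrite /gamma_oidR; apply: (bigmin_ind (Q := fun m => 3 <= m)%N); last first.
  by move=> f Hf; apply: weight_ge3.
lia.
Qed.

Lemma example_props : (max_degree e <= 1)%N -> (1 <= alpha e)%N -> (1 <= beta e)%N ->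
  lower_bound e = (gamma_oidR e)%:R /\ gamma_oidR e = (3 * beta e)%N.
Proof.
move=> hD ha hb.
have [a1 b1] := small hD.
have D1 : max_degree e = 1%N by have := maxdeg_ge1; lia.
have A1 : alpha e = 1%N by lia.
have B1 : beta e = 1%N by lia.
have [p1 p2] := part1.
have g3 := goidR_ge3.
have G3 : gamma_oidR e = 3%N by lia.
split; last by rewrite G3 B1.
apply/le_anti; rewrite p1 /= G3 /lower_bound D1 A1 B1 divr1.
have h : (2 : rat) <= Num.max (gamma e)%:R (2 * 1) by rewrite mulr1 le_max lexx orbT.
apply: le_trans (lerD h (lexx 1)); by [].
Qed.

End Main.

Definition eK2 : rel bool := [rel a b | a != b].

Lemma K2_simple : simple_graph eK2.
Proof. split; first by move=> a b; rewrite /eK2 /= eq_sym. by move=> a; rewrite /eK2 /= eqxx. Qed.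

Lemma K2_conn : connected_graph eK2.
Proof. by move=> x y; case: x; case: y; rewrite ?connect0 // connect1. Qed.


Lemma K2_props : lower_bound eK2 = (gamma_oidR eK2)%:R%R /\ gamma_oidR eK2 = (3 * beta eK2)%N.
Proof.
apply: (example_props K2_simple K2_conn); first by rewrite card_bool.
- apply/bigmax_leqP => v _; rewrite /deg; apply/card_le1_eqP => a b.
  by rewrite !inE /=; case: v; case: a; case: b.
- apply: leq_trans (alpha_ge (S := [set true]) _); first by rewrite cards1.
  by apply/forallP => x; apply/implyP; rewrite inE => /eqP ->; apply/forallP => y;
     apply/implyP; rewrite inE => /eqP ->.
- rewrite /beta; apply: (bigmin_ind (Q := fun m => 0 < m)%N); first by rewrite card_bool.
  move=> S /forallP H; have := implyP (forallP (H true) false) isT.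
  by case/orP => HS; rewrite card_gt0; apply/set0Pn; eexists; exact: HS.
Qed.

Local Open Scope ring_scope.
Theorem theorem4 :
  (forall (T : finType) (e : rel T),
     simple_graph e -> connected_graph e -> (2 <= #|T|)%N ->
     lower_bound e <= (gamma_oidR e)%:R /\ (gamma_oidR e <= 3 * beta e)%N)
  /\ (exists (T : finType) (e : rel T),
        [/\ simple_graph e, connected_graph e, (2 <= #|T|)%N &
            lower_bound e = (gamma_oidR e)%:R])
  /\ (exists (T : finType) (e : rel T),
        [/\ simple_graph e, connected_graph e, (2 <= #|T|)%N &
            gamma_oidR e = (3 * beta e)%N]).
Proof.
have [k1 k2] := K2_props.
split; first by move=> T e hs hc hn; exact: part1 hs hc hn.
split; exists bool, eK2; split; by [exact: K2_simple | exact: K2_conn | rewrite card_bool |].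
Qed.
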